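(* Let $r\ge1$ and $k\ge1$ be integers. If $\vec a,\vec b\in\mathcal H_{r,k}$ have disjoint support, i.e. $a_i\ne b_j$ for all $i,j$, then transforming $\vec a$ into $\vec b$ in the Hanoi game on $\mathcal H_{r,k}$ requires exactly $2^k-1$ moves. The same holds for $\vec a,\vec b\in\mathcal H^*_{r,k}$ with disjoint support in the Hanoi game on $\mathcal H^*_{r,k}$.
   Context: A Hanoi state is a finite sequence of nonnegative integers $\vec x=(x_1,\dots,x_k)$ with $x_i\ne x_{i-1}$ for all $i>1$. $\mathcal H_{r,k}$ is the set of Hanoi states in $\{0,1,\dots,r\}^k$, and $\mathcal H^*_{r,k}\subseteq\mathcal H_{r,k}$ is the set of proper Hanoi states, those with $x_1\ne0$. In the Hanoi game on $\mathcal H_{r,k}$ a state is transformed by moves of two types: (1) an adjustment changes $x_k$ to any other value in $\{0,1,\dots,r\}$ different from $x_{k-1}$ (if $k=1$, to any other value); (2) for $k\ge2$, an involution finds the longest final segment $(x_j,\dots,x_k)$ of $\vec x$ on which the entries alternate between the values $x_k$ and $x_{k-1}$, and swaps the values $x_k$ and $x_{k-1}$ throughout that segment (e.g. $(1,2,3,4)\mapsto(1,2,4,3)$, $(1,2,1,2)\mapsto(2,1,2,1)$). The Hanoi game on $\mathcal H^*_{r,k}$ is the same but all states involved must be proper (moves that would make $x_1=0$ are forbidden). The number of moves required is the minimum length of a sequence of moves transforming $\vec a$ into $\vec b$. *)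

(* Defs.v *)
From mathcomp Require Import all_boot.
Set Implicit Arguments. Unset Strict Implicit. Unset Printing Implicit Defensive.

(* A Hanoi state (x_1,...,x_k) is a seq nat read left to right: x_1 is the
   head, x_k is the last entry. *)

Definition adj_distinct (x : seq nat) : bool :=
  sorted (fun a b => a != b) x.

Definition hanoi (r k : nat) (x : seq nat) : Prop :=
  size x = k /\ all (fun v => v <= r) x /\ adj_distinct x.

Definition hanoi_proper (r k : nat) (x : seq nat) : Prop :=
  hanoi r k x /\ head 0 x != 0.

Definition adjustment (r : nat) (x z : seq nat) : Prop :=
  exists (y : seq nat) (c d : nat),
    [/\ x = rcons y c, z = rcons y d, d <= r, d != c &
        (if y is [::] then true else d != last 0 y)].

Fixpoint swap_alt (a b : nat) (l : seq nat) : seq nat :=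
  match l with
  | [::] => [::]
  | c :: l' => if c == a then b :: swap_alt b a l' else l
  end.

(* Involution (used only when k >= 2): with u = x_k, w = x_{k-1}, swap u
   and w on the longest final segment alternating between u and w. *)
Definition involution (x : seq nat) : seq nat :=
  let rx := rev x in
  let u := nth 0 rx 0 in
  let w := nth 0 rx 1 in
  rev (swap_alt u w rx).

Definition hanoi_move (r : nat) (S : seq nat -> Prop) (x z : seq nat) : Prop :=
  S x /\ S z /\ (adjustment r x z \/ (2 <= size x /\ z = involution x)).

Fixpoint reach_in (R : seq nat -> seq nat -> Prop) (n : nat)
    (a b : seq nat) : Prop :=
  match n with
  | 0 => a = b
  | n'.+1 => exists c, R a c /\ reach_in R n' c b
  end.

Definition moves_required (R : seq nat -> seq nat -> Prop)
    (a b : seq nat) (m : nat) : Prop :=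
  reach_in R m a b /\ (forall n, reach_in R n a b -> m <= n).

Definition disjoint_support (a b : seq nat) : Prop :=
  forall i j, i < size a -> j < size b -> nth 0 a i <> nth 0 b j.

(* Main.v *)
Require Import Defs.
From mathcomp Require Import all_boot zify.
Set Implicit Arguments. Unset Strict Implicit. Unset Printing Implicit Defensive.

Lemma reach_cat R m n a b c :
  reach_in R m a b -> reach_in R n b c -> reach_in R (m + n) a c.
Proof.
elim: m a => [|m IH] a /=; first by move=> ->.
by move=> [d [Rad Hd]] Hb; exists d; split => //; apply: IH Hd Hb.
Qed.

Lemma reach_split R m n a c :
  reach_in R (m + n) a c -> exists b, reach_in R m a b /\ reach_in R n b c.
Proof.
elim: m a => [|m IH] a /=; first by move=> H; exists a.
move=> [d [Rad Hd]]; have [b [H1 H2]] := IH _ Hd.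
by exists b; split => //; exists d.
Qed.

Lemma reach_sym R : (forall x z, R x z -> R z x) ->
  forall L a b, reach_in R L a b -> reach_in R L b a.
Proof.
move=> Rs; elim=> [|L IH] a b; first by move=> /= ->.
move=> [c [Rac Hcb]]; have := IH _ _ Hcb => Hbc.
have -> : L.+1 = L + 1 by rewrite addn1.
apply: (reach_cat Hbc) => /=.
by exists a; split => //; apply: Rs.
Qed.

Lemma reach_mono (R1 R2 : seq nat -> seq nat -> Prop) (P : seq nat -> Prop) :
  (forall x z, P x -> R1 x z -> R2 x z /\ P z) ->
  forall L a b, P a -> reach_in R1 L a b -> reach_in R2 L a b.
Proof.
move=> H; elim=> [|L IH] a b //= Pa [c [Rac Hc]].
have [R2ac Pc] := H _ _ Pa Rac.
by exists c; split => //; apply: IH Hc.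
Qed.

Fixpoint altn (u w n : nat) : seq nat :=
  if n is n'.+1 then u :: altn w u n' else [::].

Lemma size_altn u w n : size (altn u w n) = n.
Proof. by elim: n u w => //= n IH u w; rewrite IH. Qed.

Lemma mem_altn x u w n : x \in altn u w n -> x = u \/ x = w.
Proof.
elim: n u w => //= n IH u w; rewrite inE => /orP [/eqP -> | /IH []]; auto.
Qed.

Lemma altn_rcons u w n :
  altn u w n.+1 = rcons (altn u w n) (if odd n then w else u).
Proof.
by elim: n u w => //= n IH u w; rewrite IH; case: (odd n).
Qed.

Lemma rev_altn u w n :
  rev (altn u w n) = altn (if odd n then u else w) (if odd n then w else u) n.
Proof.
elim: n u w => //= n IH u w.
rewrite rev_cons IH; case E: (odd n) => /=.
  by rewrite -[RHS]/(altn w u n.+1) altn_rcons E.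
by rewrite -[RHS]/(altn u w n.+1) altn_rcons E.
Qed.

Lemma swap_alt_altn a b n : swap_alt a b (altn a b n) = altn b a n.
Proof. by elim: n a b => //= n IH a b; rewrite eqxx IH. Qed.

Lemma size_swap_alt a b l : size (swap_alt a b l) = size l.
Proof. by elim: l a b => //= c l IH a b; case: ifP => //= _; rewrite IH. Qed.

Lemma swap_alt_cat a b l m :
  swap_alt a b (l ++ m) =
  if l == altn a b (size l) then
    altn b a (size l) ++ swap_alt (if odd (size l) then b else a)
                                  (if odd (size l) then a else b) m
  else swap_alt a b l ++ m.
Proof.
elim: l a b => [|c l IH] a b //=.
case: (eqVneq c a) => [->|ca] /=.
  rewrite IH eqseq_cons eqxx /=.
  by case: ifP => _ //; case: (odd (size l)).
by rewrite eqseq_cons (negbTE ca).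
Qed.

Lemma size_involution x : size (involution x) = size x.
Proof. by rewrite /involution size_rev size_swap_alt size_rev. Qed.

Lemma involution_cons x1 x' : 2 <= size x' ->
  exists y1, involution (x1 :: x') = y1 :: involution x' /\
   (y1 = x1 \/ exists P Q, x1 :: x' = altn P Q (size x').+1 /\
                           y1 :: involution x' = altn Q P (size x').+1).
Proof.
move=> hs.
rewrite /involution rev_cons -cats1.
set l := rev x'.
have sl : size l = size x' by rewrite size_rev.
have -> : nth 0 (l ++ [:: x1]) 0 = nth 0 l 0 by rewrite nth_cat sl; case: (size x') hs.
have -> : nth 0 (l ++ [:: x1]) 1 = nth 0 l 1 by rewrite nth_cat sl; case: (size x') hs => [|[]].
set u := nth 0 l 0; set w := nth 0 l 1.
rewrite swap_alt_cat.
case: ifP => [/eqP El|_]; last first.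
  by exists x1; rewrite rev_cat /=; split => //; left.
have Esw : swap_alt u w l = altn w u (size l) by rewrite {1}El swap_alt_altn.
have Ex' : x' = rev (altn u w (size x')) by rewrite -sl -El revK.
rewrite Esw sl /=.
case: (eqVneq x1 (if odd (size x') then w else u)) => [Ep|Np]; last first.
  by exists x1; rewrite rev_cat /=; split => //; left.
exists (if odd (size x') then u else w); rewrite rev_cat /= Ep; split => //; right.
have H1 : forall s a b, (if odd s then b else a) :: rev (altn a b s) =
   altn (if odd s.+1 then a else b) (if odd s.+1 then b else a) s.+1.
  by move=> s a b; rewrite -rev_rcons -altn_rcons rev_altn.
exists (if odd (size x').+1 then u else w), (if odd (size x').+1 then w else u).
split.
  transitivity ((if odd (size x') then w else u) :: rev (altn u w (size x'))).
    by rewrite -Ex'.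
  exact: H1.
exact: H1.
Qed.

Definition St (r f : nat) (x : seq nat) : bool :=
  [&& all (fun v => v <= r) x, adj_distinct x &
      (if x is x1 :: _ then x1 != f else true)].

Definition Mv (r f : nat) (x z : seq nat) : Prop :=
  St r f x /\ St r f z /\
  (adjustment r x z \/ (2 <= size x /\ z = involution x)).

Lemma St_cons r f x1 x' :
  St r f (x1 :: x') = [&& x1 <= r, x1 != f & St r x1 x'].
Proof.
rewrite /St /adj_distinct /=.
case: x' => [|y ys] /=; first by rewrite !andbT.
rewrite eq_sym.
by case: (x1 <= r); case: (x1 != f); case: (y != x1); case: (y <= r);
   case: (all _ ys); case: (path _ y ys).
Qed.

Lemma size_Mv r f x z : Mv r f x z -> size z = size x.
Proof.
move=> [_ [_ [[y [c [d [-> -> _ _ _]]]]|[_ ->]]]].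
  by rewrite !size_rcons.
by rewrite size_involution.
Qed.

Lemma adj_cons r x1 x' z1 z' : x' != [::] ->
  adjustment r (x1 :: x') (z1 :: z') -> z1 = x1 /\ adjustment r x' z'.
Proof.
move=> nx [[|y0 y'] [c [d [Ex Ez dr dc Hl]]]].
  by move: Ex => [_ E]; rewrite E in nx.
move: Ex Ez => [<- Ex] [-> Ez]; split => //.
exists y', c, d; split => //.
by case: y' Ex Ez Hl.
Qed.

Lemma adj_cons' r x1 x' z' :
  adjustment r x' z' -> St r x1 z' -> adjustment r (x1 :: x') (x1 :: z').
Proof.
move=> [y' [c [d [Ex Ez dr dc Hl]]]] Sz.
exists (x1 :: y'), c, d; split => //; try by rewrite ?Ex ?Ez.
case: y' Ex Ez Hl => [|y0 ys] Ex Ez Hl /=.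
  by move: Sz; rewrite Ez /St /=; case/andP.
exact: Hl.
Qed.

Lemma adj_one r a z :
  adjustment r [:: a] z -> exists d, z = [:: d] /\ d <= r /\ d != a.
Proof.
move=> [[|y0 y'] [c [d [Ex Ez dr dc Hl]]]].
  by move: Ex => [Ea]; exists d; rewrite Ez Ea.
by move: Ex; case: y' {Ez Hl}.
Qed.

Lemma adj_one' r a d : d <= r -> d != a -> adjustment r [:: a] [:: d].
Proof. by move=> dr da; exists [::], a, d. Qed.

Lemma St_altn r f u w n : u != w -> u <= r -> w <= r -> u != f ->
  St r f (altn u w n).
Proof.
elim: n u w f => [|n IH] u w f uw ur wr uf //=.
rewrite St_cons ur uf /=; apply: IH => //; by rewrite eq_sym.
Qed.

Lemma involution_altn u w n : 2 <= n -> involution (altn u w n) = altn w u n.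
Proof.
move=> hn; rewrite /involution rev_altn.
have H0 : forall P Q, nth 0 (altn P Q n) 0 = P by case: n hn.
have H1 : forall P Q, nth 0 (altn P Q n) 1 = Q by clear H0; case: n hn => [|[]].
rewrite H0 H1 swap_alt_altn rev_altn; by case: (odd n).
Qed.

Lemma Mv_alt r f u w n : u != w -> u <= r -> w <= r -> u != f -> w != f ->
  2 <= n -> Mv r f (altn u w n) (altn w u n).
Proof.
move=> uw ur wr uf wf hn; split; first exact: St_altn.
split; first by apply: St_altn => //; rewrite eq_sym.
by right; rewrite size_altn involution_altn.
Qed.

Lemma Mv_tail r f x1 x' z' : x1 <= r -> x1 != f -> Mv r x1 x' z' ->
  Mv r f (x1 :: x') (x1 :: z').
Proof.
move=> xr xf [Sx [Sz [Ha|[hs Ez]]]].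
  split; first by rewrite St_cons xr xf.
  split; first by rewrite St_cons xr xf.
  by left; apply: adj_cons'.
split; first by rewrite St_cons xr xf.
split; first by rewrite St_cons xr xf.
right; split; first by rewrite /= ltnW.
have [y1 [Ei [Ey|[P [Q [E1 E2]]]]]] := involution_cons x1 hs.
  by rewrite Ei Ez Ey.
exfalso.
move: E1 E2 => [EP Ex'] [_ Ez'].
move: Sz; rewrite Ez Ez'; case: (size x') hs => [|[|m]] // _.
by rewrite /St /= -EP eqxx /= !andbF.
Qed.

Lemma Mv_cons r f x1 x' z1 z' : x' != [::] -> Mv r f (x1 :: x') (z1 :: z') ->
  (z1 = x1 /\ Mv r x1 x' z') \/
  (exists w, x1 :: x' = altn x1 w (size x').+1 /\
             z1 :: z' = altn w x1 (size x').+1).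
Proof.
move=> nx [Sx [Sz [Ha|[hs Ez]]]].
  have [E1 Ha'] := adj_cons nx Ha.
  left; split => //; split; first by move: Sx; rewrite St_cons => /and3P [].
  split; first by move: Sz; rewrite St_cons E1 => /and3P [].
  by left.
case: x' nx hs Sx Ez => [|x2 [|x3 x'']] // _ hs Sx Ez.
  right; exists x2; move: Ez; rewrite /involution /= eqxx /= eqxx /=.
  by case=> -> ->.
have hs2 : 2 <= size [:: x2, x3 & x''] by [].
have [y1 [Ei [Ey|[P [Q [E1 E2]]]]]] := involution_cons x1 hs2.
  left; move: Ez; rewrite Ei; case=> E1 Ez'.
  have E1' : z1 = x1 by rewrite E1 Ey.
  split => //; split.
    by move: Sx; rewrite St_cons => /and3P [].
  split; first by move: Sz; rewrite St_cons E1' => /and3P [].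
  by right; split.
right; exists Q; move: E1 E2; rewrite -Ei -Ez => E1 E2.
by move: (E1) => [EP _]; rewrite E1 E2 EP.
Qed.

Lemma Mv_one r f a z : Mv r f [:: a] z -> exists d, z = [:: d] /\ d != a.
Proof.
move=> [_ [_ [Ha|[hs _]]]] //.
by have [d [-> [_ da]]] := adj_one Ha; exists d.
Qed.

Lemma Mv_one' r f a d : St r f [:: a] -> St r f [:: d] -> d != a ->
  Mv r f [:: a] [:: d].
Proof.
move=> Sa Sd da; split => //; split => //; left; apply: adj_one' => //.
by move: Sd; rewrite /St /= => /andP [/andP [] ].
Qed.

Lemma Mv_sym r f x z : Mv r f x z -> Mv r f z x.
Proof.
elim: x f z => [|x1 x' IH] f z.
  by move=> [_ [_ [[y [c [d [E _ _ _ _]]]]|[]]]] //; case: y E.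
move=> M.
have sz := size_Mv M.
case: z M sz => [|z1 z'] M // sz.
case: x' IH M sz => [|x2 x''] IH M sz.
  have [d [Ez da]] := Mv_one M.
  case: M => [Sx [Sz _]]; rewrite Ez in Sz *; apply: Mv_one' => //.
  by rewrite eq_sym.
have [[-> M']|[w [E1 E2]]] := Mv_cons (isT : x2 :: x'' != [::]) M.
  case: M => [Sx _]; move: Sx; rewrite St_cons => /and3P [xr xf _].
  by apply: Mv_tail => //; apply: IH.
case: M => [Sx [Sz _]].
suff : Mv r f (altn w x1 (size (x2 :: x'')).+1) (altn x1 w (size (x2 :: x'')).+1).
  by rewrite -E1 -E2.
have Ew : x2 = w by case: E1.
have Ez1 : z1 = w by case: E2.
have wf : w != f by move: Sz; rewrite St_cons Ez1 => /and3P [].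
move: Sx; rewrite St_cons => /and3P [xr xf]; rewrite St_cons Ew.
move=> /and3P [wr wx _].
by apply: Mv_alt.
Qed.

Lemma reach_size r f L a b : reach_in (Mv r f) L a b -> size b = size a.
Proof.
elim: L a => [|L IH] a /=; first by move=> ->.
by move=> [c [M H]]; rewrite (IH _ H) (size_Mv M).
Qed.

Lemma split_first r f L x1 x' b : x' != [::] ->
  reach_in (Mv r f) L (x1 :: x') b -> head x1 b != x1 ->
  exists j w, j < L /\ w != x1 /\ w != f /\ x1 != f /\
    reach_in (Mv r x1) j x' (altn w x1 (size x')) /\
    reach_in (Mv r f) (L - j) (altn x1 w (size x').+1) b /\
    reach_in (Mv r f) (L - j.+1) (altn w x1 (size x').+1) b.
Proof.
elim: L x' => [|L IH] x' nx /=; first by move=> <- /=; rewrite eqxx.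
move=> [c [M H]] hb.
have sc := size_Mv M.
case: c M H sc => [|c1 c'] M H sc //.
have [[Ec1 M']|[w [E1 E2]]] := Mv_cons nx M.
  have nc : c' != [::] by case: c' M' {M H sc} => //; case: x' nx => //= ? ? _ /size_Mv.
  rewrite Ec1 in H.
  have [j [w [jL [wx [wf [xf [Hj [H1 H2]]]]]]]] := IH c' nc H hb.
  have scx : size c' = size x' by exact: size_Mv M'.
  exists j.+1, w; do 4! (split => //).
  split; first by exists c'; split => //; rewrite -scx.
  by rewrite !subSS -scx.
case: (M) => [Sx [Sc _]].
move: (Sx); rewrite St_cons => /and3P [_ xf Sx'].
have wf : w != f by move: Sc; rewrite E2 St_cons => /and3P [].
have Ex' : x' = altn w x1 (size x') by case: E1.
have wx : w != x1.
  move: Sx'; rewrite Ex'; case E: (size x') => [|m].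
    by move: nx; rewrite -size_eq0 E.
  by rewrite /= St_cons => /and3P [].
exists 0, w; do 5! (split => //).
rewrite subn0 subn1 -Ex'; split.
  by exists (c1 :: c'); split.
by move: H; rewrite E2.
Qed.

Lemma reach_rev r f L a b : reach_in (Mv r f) L a b -> reach_in (Mv r f) L b a.
Proof. apply: reach_sym; exact: Mv_sym. Qed.

Lemma split_last r f L a b1 b' : b' != [::] ->
  reach_in (Mv r f) L a (b1 :: b') -> head b1 a != b1 ->
  exists j v, j < L /\ v != b1 /\ v != f /\ b1 != f /\
    reach_in (Mv r b1) j (altn v b1 (size b')) b' /\
    reach_in (Mv r f) (L - j) a (altn b1 v (size b').+1) /\
    reach_in (Mv r f) (L - j.+1) a (altn v b1 (size b').+1).
Proof.
move=> nb H ha.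
have [j [v [jL [vb [vf [bf [H1 [H2 H3]]]]]]]] := split_first nb (reach_rev H) ha.
exists j, v; do 4! split => //.
split; first exact: reach_rev.
by split; apply: reach_rev.
Qed.

Lemma reach_lift r f L x1 x' z' : x1 <= r -> x1 != f ->
  reach_in (Mv r x1) L x' z' -> reach_in (Mv r f) L (x1 :: x') (x1 :: z').
Proof.
move=> xr xf; elim: L x' => [|L IH] x' /=; first by move=> ->.
move=> [c [M H]]; exists (x1 :: c); split; first exact: Mv_tail.
exact: IH.
Qed.

Lemma mem_altn_not x u w n : x != u -> x != w -> x \notin altn u w n.
Proof.
move=> xu xw; apply/negP => /mem_altn [] E.
  by rewrite E eqxx in xu.
by rewrite E eqxx in xw.
Qed.

Lemma AF r n :
  (forall f L a w z, size a = n -> w \notin a -> (z \notin a) || (z == f) ->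
     w != z -> reach_in (Mv r f) L a (altn w z n) -> 2 ^ n - 1 <= L) /\
  (forall f L a v b', size a = n.+1 -> v \notin a ->
     reach_in (Mv r f) L a (v :: b') -> 2 ^ n <= L).
Proof.
elim: n => [|n [IHA IHF]].
  split => // f [|L] [|a1 [|a2 a']] v b' //= _ va.
  by move=> [Ea _]; rewrite Ea mem_seq1 eqxx in va.
have HA : forall f L a w z, size a = n.+1 -> w \notin a -> (z \notin a) || (z == f) ->
     w != z -> reach_in (Mv r f) L a (altn w z n.+1) -> 2 ^ n.+1 - 1 <= L.
  move=> f L; elim/ltn_ind: L => L IHL a w z sa wa za wz H.
  case: n IHA IHF IHL sa H => [|n] IHA IHF IHL sa H.
    case: L IHL H => [|L] // IHL H.
    by move: H => /= Ea; rewrite Ea /= mem_seq1 eqxx in wa.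
  have eq_sym_neq : forall x y : nat, x != y -> y != x by move=> x y; rewrite eq_sym.
  have nb : altn z w n.+1 != [::] by [].
  case: a sa wa za H => [|a1 a'] // sa wa za H.
  have ha : head w (a1 :: a') != w.
    by apply/eqP => /= E; rewrite E in_cons eqxx in wa.
  have [j [v [jL [vw [vf [wf [H1 [H2 H3]]]]]]]] := split_last nb H ha.
  rewrite size_altn in H1 H2 H3.
  case: (eqVneq v z) => [Evz|nvz].
    have zf : z != f by rewrite -Evz.
    have za' : z \notin a1 :: a' by move: za; rewrite (negbTE zf) orbF.
    have jl : L - j.+1 < L by lia.
    have zw : z != w by rewrite eq_sym.
    rewrite Evz in H3.
    have h := IHL (L - j.+1) jl (a1 :: a') z w sa za' (introT orP (or_introl wa)) zw H3.
    by apply: leq_trans h _; rewrite leq_subr.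
  have zw : z != w by rewrite eq_sym.
  have h1 := IHA w j (altn v w n.+1) z w (size_altn _ _ _)
     (mem_altn_not _ (eq_sym_neq _ _ nvz) zw) (introT orP (or_intror (eqxx w))) zw H1.
  have h2 := IHF f (L - j) (a1 :: a') w (altn v w n.+1) sa wa H2.
  rewrite expnS; lia.
split => //.
move=> f L; elim/ltn_ind: L => L IHL [|a1 a'] v b' // sa va H.
have nx : a' != [::] by move: sa => /= [] sa'; rewrite -size_eq0 sa'.
have va1 : v != a1 by apply/eqP => E; rewrite E in_cons eqxx in va.
have hb : head a1 (v :: b') != a1 by [].
have sa' : size a' = n.+1 by case: sa.
have [j [w [jL [wa1 [wf [a1f [H1 [H2 H3]]]]]]]] := split_first nx H hb.
rewrite sa' in H1 H2 H3.
case: (eqVneq w v) => [Ewv|nwv].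
  rewrite Ewv in H1.
  have va' : v \notin a' by move: va; rewrite in_cons negb_or => /andP [].
  have h := HA a1 j a' v a1 sa' va' (introT orP (or_intror (eqxx a1))) va1 H1.
  rewrite expnS in h *; lia.
have jl : L - j.+1 < L by lia.
have vn : v \notin altn w a1 n.+2 by apply: mem_altn_not => //; rewrite eq_sym.
have h := IHL (L - j.+1) jl (altn w a1 n.+2) v b' (size_altn _ _ _) vn H3.
by apply: leq_trans h _; rewrite leq_subr.
Qed.

Lemma lowerM r n f L a b : size a = n.+1 -> all (fun x => x \notin b) a ->
  reach_in (Mv r f) L a b -> 2 ^ n.+1 - 1 <= L.
Proof.
move=> sa dab H.
have sb : size b = n.+1 by rewrite (reach_size H).
case: a sa dab H => [|a1 a'] // sa dab H.
have a1b : a1 \notin b by case/andP: dab.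
case: n sa sb {a1b} => [|n] sa sb.
  case: L H => [|L] // H.
  have E : a1 :: a' = b := H; by move: dab; rewrite -E /= mem_head.
case: b sb dab H => [|b1 b'] // sb dab H.
have nb : b' != [::] by move: sb => /= [] sb'; rewrite -size_eq0 sb'.
have sb' : size b' = n.+1 by case: sb.
have b1a : b1 \notin a1 :: a'.
  apply/negP => /(allP dab) /=; by rewrite mem_head.
have ha : head b1 (a1 :: a') != b1.
  by apply/eqP => /= E; rewrite E mem_head in b1a.
have [j [v [jL [vb [vf [bf [H1 [H2 H3]]]]]]]] := split_last nb H ha.
rewrite sb' in H1 H2 H3.
have [AF1 AF2] := AF r n.+2.
have [AF1' AF2'] := AF r n.+1.
case vin: (v \in b1 :: b').
  have va : v \notin a1 :: a'.
    by apply/negP => /(allP dab) /=; rewrite vin.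
  have h := AF1 f (L - j.+1) (a1 :: a') v b1 sa va (introT orP (or_introl b1a)) vb H3.
  by apply: leq_trans h _; rewrite leq_subr.
have vb' : v \notin b' by move: vin; rewrite in_cons => /norP [].
have h1 := AF1' b1 j b' v b1 sb' vb' (introT orP (or_intror (eqxx b1))) vb (reach_rev H1).
have h2 := AF2' f (L - j) (a1 :: a') b1 (altn v b1 n.+1) sa b1a H2.
rewrite expnS; lia.
Qed.

Lemma eq_sym_neq (x y : nat) : x != y -> y != x.
Proof. by rewrite eq_sym. Qed.

Lemma upperU r n : forall f a w, f <= r -> size a = n -> St r f a ->
  w \notin a -> w != f -> w <= r ->
  reach_in (Mv r f) (2 ^ n - 1) a (altn w f n).
Proof.
elim: n => [|n IH] f a w fr sa Sa wa wf wr.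
  by case: a sa Sa wa.
case: a sa Sa wa => [|a1 a'] // sa Sa wa.
have wa1 : w != a1 by apply/eqP => E; rewrite E mem_head in wa.
have wa' : w \notin a' by move: wa; rewrite in_cons negb_or => /andP [].
move: (Sa); rewrite St_cons => /and3P [a1r a1f Sa'].
have sa' : size a' = n by case: sa.
case: n IH sa sa' => [|n] IH sa sa'.
  clear Sa wa sa; case: a' sa' Sa' wa' => // _ _ _ /=.
  exists [:: w]; split => //.
  apply: Mv_one' => //.
    by rewrite /St /= a1r a1f.
  by rewrite /St /= wr wf.
have H1 := IH a1 a' w a1r sa' Sa' wa' wa1 wr.
have H1' := reach_lift a1r a1f H1.
have M := Mv_alt (eq_sym_neq wa1) a1r wr a1f wf (isT : 2 <= n.+2).
have Sw : St r w (altn a1 w n.+1) by apply: St_altn => //; rewrite eq_sym.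
have fn : f \notin altn a1 w n.+1 by apply: mem_altn_not; rewrite eq_sym.
have H2 := IH w (altn a1 w n.+1) f wr (size_altn _ _ _) Sw fn (eq_sym_neq wf) fr.
have H2' := reach_lift wr wf H2.
have -> : 2 ^ n.+2 - 1 = (2 ^ n.+1 - 1) + (1 + (2 ^ n.+1 - 1)).
  rewrite expnS; have : 0 < 2 ^ n.+1 by rewrite expn_gt0.
  lia.
apply: (reach_cat H1'); apply: (reach_cat (b := altn w a1 n.+2)).
  by exists (altn w a1 n.+2); split.
exact: H2'.
Qed.

Lemma upperT r n F a b : size a = n.+1 -> size b = n.+1 -> St r F a -> St r F b ->
  all (fun x => x \notin b) a -> reach_in (Mv r F) (2 ^ n.+1 - 1) a b.
Proof.
case: a => [|a1 a'] // sa; case: b => [|b1 b'] // sb Sa Sb dab.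
have b1a : b1 != a1.
  by apply/eqP => E; move: dab => /andP [+ _]; rewrite E mem_head.
have a1b' : a1 \notin b'.
  by move: dab => /andP [+ _]; rewrite in_cons negb_or => /andP [].
have b1a' : b1 \notin a'.
  apply/negP => Hin; move: dab => /andP [_ /allP /(_ _ Hin)].
  by rewrite mem_head.
move: (Sa); rewrite St_cons => /and3P [a1r a1F Sa'].
move: (Sb); rewrite St_cons => /and3P [b1r b1F Sb'].
have sa' : size a' = n by case: sa.
have sb' : size b' = n by case: sb.
case: n sa sb sa' sb' => [|n] sa sb sa' sb'.
  case: a' b' sa' sb' {Sa' Sb' a1b' b1a' dab Sa Sb sa sb} => [|? ?] [|? ?] // _ _.
  exists [:: b1]; split => //; apply: Mv_one' => //.
    by rewrite /St /= a1r a1F.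
  by rewrite /St /= b1r b1F.
have H1 := upperU a1r sa' Sa' b1a' b1a b1r.
have H1' := reach_lift a1r a1F H1.
have M := Mv_alt (eq_sym_neq b1a) a1r b1r a1F b1F (isT : 2 <= n.+2).
have H2 := reach_rev (upperU b1r sb' Sb' a1b' (eq_sym_neq b1a) a1r).
have H2' := reach_lift b1r b1F H2.
have -> : 2 ^ n.+2 - 1 = (2 ^ n.+1 - 1) + (1 + (2 ^ n.+1 - 1)).
  rewrite expnS; have : 0 < 2 ^ n.+1 by rewrite expn_gt0.
  lia.
apply: (reach_cat H1'); apply: (reach_cat (b := altn b1 a1 n.+2)).
  by exists (altn b1 a1 n.+2); split.
exact: H2'.
Qed.

Lemma hanoi_St r k x : hanoi r k x -> size x = k /\ St r r.+1 x.
Proof.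
move=> [sx [ax dx]]; split => //; rewrite /St ax dx /=.
case: x ax {sx dx} => //= x1 x' /andP [x1r _].
by rewrite neq_ltn ltnS x1r.
Qed.

Lemma St_hanoi r k x : size x = k -> St r r.+1 x -> hanoi r k x.
Proof. by move=> sx /and3P [ax dx _]. Qed.

Lemma proper_St r k x : 1 <= k -> hanoi_proper r k x -> size x = k /\ St r 0 x.
Proof.
move=> k1 [[sx [ax dx]] hx]; split => //; rewrite /St ax dx /=.
by case: x sx hx {ax dx} => [|x1 x'] sx //=; rewrite -sx in k1.
Qed.

Lemma St_proper r k x : 1 <= k -> size x = k -> St r 0 x -> hanoi_proper r k x.
Proof.
move=> k1 sx /and3P [ax dx hx]; split => //.
by case: x sx hx {ax dx} => [|x1 x'] sx //=; rewrite -sx in k1.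
Qed.

Lemma disj_all a b : disjoint_support a b -> all (fun x => x \notin b) a.
Proof.
move=> D; apply/allP => x xa; apply/negP => xb.
have := D (index x a) (index x b); rewrite !index_mem => /(_ xa xb).
by rewrite !nth_index.
Qed.

Lemma reach_to_Mv (S : seq nat -> Prop) r F L a b :
  (forall x z, hanoi_move r S x z -> Mv r F x z) ->
  reach_in (hanoi_move r S) L a b -> reach_in (Mv r F) L a b.
Proof.
move=> H; apply: (reach_mono (P := fun _ => True)) => //.
by move=> x z _ /H.
Qed.

Theorem lemma6 (r k : nat) :
  1 <= r -> 1 <= k ->
  (forall a b : seq nat,
      hanoi r k a -> hanoi r k b -> disjoint_support a b ->
      moves_required (hanoi_move r (hanoi r k)) a b (2 ^ k - 1)) /\
  (forall a b : seq nat,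
      hanoi_proper r k a -> hanoi_proper r k b -> disjoint_support a b ->
      moves_required (hanoi_move r (hanoi_proper r k)) a b (2 ^ k - 1)).
Proof.
move=> r1; case: k => [|n] // _; split.
  move=> a b Ha Hb D.
  have [sa Sa] := hanoi_St Ha; have [sb Sb] := hanoi_St Hb.
  have dab := disj_all D.
  split.
    apply: (reach_mono (P := fun x => size x = n.+1)) (upperT sa sb Sa Sb dab) => //.
    move=> x z sx M; have sz : size z = n.+1 by rewrite (size_Mv M).
    case: M => [Sx [Sz C]]; split => //; split; first exact: St_hanoi.
    by split; first exact: St_hanoi.
  move=> L H; apply: (lowerM sa dab (f := r.+1)).
  apply: reach_to_Mv H => x z [Hx [Hz C]].
  by split; [exact: (hanoi_St Hx).2 | split; [exact: (hanoi_St Hz).2 | ]].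
move=> a b Ha Hb D.
have [sa Sa] := proper_St (isT : 0 < n.+1) Ha.
have [sb Sb] := proper_St (isT : 0 < n.+1) Hb.
have dab := disj_all D.
split.
  apply: (reach_mono (P := fun x => size x = n.+1)) (upperT sa sb Sa Sb dab) => //.
  move=> x z sx M; have sz : size z = n.+1 by rewrite (size_Mv M).
  case: M => [Sx [Sz C]]; split => //; split; first exact: St_proper.
  by split; first exact: St_proper.
move=> L H; apply: (lowerM sa dab (f := 0)).
apply: reach_to_Mv H => x z [Hx [Hz C]].
by split; [exact: (proper_St (isT : 0 < n.+1) Hx).2 | split; [exact: (proper_St (isT : 0 < n.+1) Hz).2 | ]].
Qed.
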